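(* If an abstract negotiation method $\mathcal M$ is Pareto efficient and symmetric, then every party can manipulate $\mathcal M$.
   Context: Setting: $\mathcal D\subsetneq\mathbb R^m$ is closed, convex, bounded. $\mathcal U$ is the set of functions $u:\mathcal D\to\mathbb R$ with closed convex superlevel sets and a unique global maximizer. An $n$-party ANM is a map $\mathcal M:\mathcal U^n\times\mathcal D\to\mathcal U$ with settlement $\mathcal S(\mathcal M,\vec u,x_0)=\arg\max_{x\in\mathcal D}\mathcal M(\vec u,x_0)(x)$; ANMs are assumed continuous ($x\mapsto\mathcal S(\mathcal M,\vec u,x)$ continuous, and $\vec u\mapsto\mathcal S(\mathcal M,\vec u,x_0)$ continuous for some pseudometric on $\mathcal U^n$). $\mathcal F(u,p)=\{x:u(x)\ge u(p)\}$, $\mathcal F(\vec u,p)=\bigcap_i\mathcal F(u_i,p)$, $\mathcal P(\vec u)=\{x:\mathcal F(\vec u,x)=\{x\}\}$; $\mathcal M$ is Pareto efficient if $\mathcal S(\mathcal M,\vec u,x_0)\in\mathcal P(\vec u)$ for all $(\vec u,x_0)$; symmetric if $\mathcal S(\mathcal M,\vec u,x)=\mathcal S(\mathcal M,\vec u_\sigma,x)$ for every permutation $\sigma$ of the parties. Party $i$ can manipulate $\mathcal M$ if there exist $\vec u\in\mathcal U^n$, $x_0\in\mathcal D$, $\tilde u_i\in\mathcal U$ with $u_i(\mathcal S(\mathcal M,\tilde u_i,\vec u_{-i},x_0))>u_i(\mathcal S(\mathcal M,\vec u,x_0))$, where $(\tilde u_i,\vec u_{-i})$ replaces $u_i$ by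 $\tilde u_i$.
   Formalization: The number of parties n is at least 2, and $\mathcal D$ contains three affinely independent points, so $\mathcal D$ is not contained in any line. The statement above fails without it. *)

(* Defs.v *)
From HB Require Import structures.
From mathcomp Require Import all_boot all_order all_algebra all_fingroup.
From mathcomp Require Import all_classical all_reals all_analysis.
Set Implicit Arguments. Unset Strict Implicit. Unset Printing Implicit Defensive.
Import Order.TTheory GRing.Theory Num.Theory.
Import numFieldNormedType.Exports.
Local Open Scope classical_set_scope.
Local Open Scope ring_scope.

Section ANM.
Variables (R : realType) (m n : nat) (D : set 'rV[R]_m).

Definition pt := {x : 'rV[R]_m | D x}.

Definition embed (A : set pt) : set 'rV[R]_m := (@proj1_sig _ _) @` A.

Definition Fsup (u : pt -> R) (p : pt) : set pt := [set x | u p <= u x].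

Definition inU (u : pt -> R) : Prop :=
  (forall p, closed (embed (Fsup u p)) /\ convex_set (embed (Fsup u p))) /\
  (exists! x : pt, forall y : pt, u y <= u x).

Definition profile := 'I_n -> pt -> R.
Definition profileU (u : profile) : Prop := forall i, inU (u i).

(* an n-party ANM: a map U^n x D -> U (arbitrary outside U^n) *)
Definition is_ANM (M : profile -> pt -> (pt -> R)) : Prop :=
  forall u x0, profileU u -> inU (M u x0).

Definition is_argmax (f : pt -> R) (s : pt) : Prop := forall y, f y <= f s.

(* s = S(M, u, x0) (the argmax is unique since M u x0 is in U) *)
Definition settles (M : profile -> pt -> (pt -> R)) (u : profile) (x0 s : pt) :=
  is_argmax (M u x0) s.

Definition cont_in_x (M : profile -> pt -> (pt -> R)) : Prop :=
  forall u, profileU u -> forall (x : pt) (e : R), 0 < e ->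
    exists2 d : R, 0 < d & forall (y sx sy : pt),
      `|proj1_sig x - proj1_sig y| < d -> settles M u x sx -> settles M u y sy ->
      `|proj1_sig sx - proj1_sig sy| < e.

Definition pseudometric (d : profile -> profile -> R) : Prop :=
  (forall u, d u u = 0) /\ (forall u v, d u v = d v u) /\
  (forall u v w, d u w <= d u v + d v w).

Definition cont_in_u (M : profile -> pt -> (pt -> R)) : Prop :=
  exists d, pseudometric d /\
  forall (x0 : pt) u, profileU u -> forall e : R, 0 < e ->
    exists2 del : R, 0 < del & forall v, profileU v -> d u v < del ->
      forall su sv, settles M u x0 su -> settles M v x0 sv ->
      `|proj1_sig su - proj1_sig sv| < e.

Definition Fprof (u : profile) (p : pt) : set pt := [set x | forall i, u i p <= u i x].
Definition pareto (u : profile) (x : pt) : Prop := Fprof u x = [set x].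

Definition pareto_efficient (M : profile -> pt -> (pt -> R)) : Prop :=
  forall u x0 s, profileU u -> settles M u x0 s -> pareto u s.

Definition symmetric_ANM (M : profile -> pt -> (pt -> R)) : Prop :=
  forall u x0 (sigma : 'S_n) s s', profileU u ->
    settles M u x0 s -> settles M (fun j => u (sigma j)) x0 s' -> s = s'.

Definition replace (u : profile) (i : 'I_n) (v : pt -> R) : profile :=
  fun j => if j == i then v else u j.

Definition can_manipulate (M : profile -> pt -> (pt -> R)) (i : 'I_n) : Prop :=
  exists u x0 v s s', [/\ profileU u, inU v, settles M u x0 s,
    settles M (replace u i v) x0 s' & u i s < u i s'].

End ANM.

(* D is not contained in a line (affine dimension >= 2) *)
Definition not_collinear (R : realType) (m : nat) (D : set 'rV[R]_m) : Prop :=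
  exists a b c, [/\ D a, D b, D c &
    forall s t : R, s *: (b - a) + t *: (c - a) = 0 -> s = 0 /\ t = 0].

(* Main.v *)
Require Import Defs.
From HB Require Import structures.
From mathcomp Require Import all_boot all_order all_algebra all_fingroup.
From mathcomp Require Import all_classical all_reals all_analysis.
Import Order.TTheory GRing.Theory Num.Theory.
Import numFieldNormedType.Exports.
Local Open Scope classical_set_scope.
Local Open Scope ring_scope.

From mathcomp Require Import ring lra zify.
Set Implicit Arguments. Unset Strict Implicit. Unset Printing Implicit Defensive.

Local Close Scope ring_scope.
Local Close Scope classical_set_scope.

Inductive alt := aA | aB | aC.
Definition alt_eqb (x y : alt) := match x, y with
  | aA, aA | aB, aB | aC, aC => true | _, _ => false end.
Lemma alt_eqP : Equality.axiom alt_eqb.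
Proof. by case; case; constructor. Qed.
HB.instance Definition _ := hasDecEq.Build alt alt_eqP.

Inductive ty := tAB | tAC | tBA | tBC | tCA | tCB.
Definition ty_nat (t : ty) : nat := match t with
  | tAB => 0 | tAC => 1 | tBA => 2 | tBC => 3 | tCA => 4 | tCB => 5 end.
Definition ty_eqb (x y : ty) := ty_nat x == ty_nat y.
Lemma ty_eqP : Equality.axiom ty_eqb.
Proof. by case; case; constructor. Qed.
HB.instance Definition _ := hasDecEq.Build ty ty_eqP.

Definition topt (t : ty) : alt := match t with
  | tAB | tAC => aA | tBA | tBC => aB | tCA | tCB => aC end.
Definition midt (t : ty) : alt := match t with
  | tBA | tCA => aA | tAB | tCB => aB | tAC | tBC => aC end.
Definition rk (t : ty) (x : alt) : nat :=
  if x == topt t then 2 else if x == midt t then 1 else 0.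

Lemma rk_top t : rk t (topt t) = 2.
Proof. by case: t. Qed.
Lemma rk2 t x : (2 <= rk t x)%N -> x = topt t.
Proof. by case: t; case: x. Qed.
Lemma rk0 t x y : rk t x = 0 -> (rk t y <= 0)%N -> y = x.
Proof. by case: t; case: x; case: y. Qed.
Lemma rk_le2 t x : (rk t x <= 2)%N.
Proof. by case: t; case: x. Qed.


Lemma alt3 (x y z w : alt) : x != y -> y != z -> x != z -> [\/ w = x, w = y | w = z].
Proof.
case: x; case: y; case: z; case: w => //= _ _ _;
  first [exact: Or31 | exact: Or32 | exact: Or33].
Qed.
Lemma rk_mid t : rk t (midt t) = 1.
Proof. by case: t. Qed.
Lemma rk_z t w : w != topt t -> w != midt t -> rk t w = 0.
Proof. by rewrite /rk => /negbTE -> /negbTE ->. Qed.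
Lemma top_mid t : topt t != midt t.
Proof. by case: t. Qed.

Ltac permc := apply/seq.permP => pp; rewrite /= ?count_cat ?count_nseq /=; nia.

Lemma thr (p : nat -> bool) n : (forall k, (k < n)%N -> p k -> p k.+1) -> p 0 = false -> p n ->
  exists t, [/\ (0 < t)%N, (t <= n)%N & forall k, (k <= n)%N -> p k = (t <= k)%N].
Proof.
move=> mono p0 pn.
have ex : exists k, p k by exists n.
case: (ex_minnP ex) => t pt tmin.
have tn : (t <= n)%N by apply: tmin.
exists t; split => //.
- by case: t pt {tmin tn} => //; rewrite p0.
- move=> k kn; apply/idP/idP; first by apply: tmin.
  move=> tk; have : forall d, (t + d <= n)%N -> p (t + d).
    elim=> [|d IH] H; first by rewrite addn0.
    by rewrite addnS; apply: mono; [lia | apply: IH; lia].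
  by move=> /(_ (k - t)); rewrite subnKC //; apply.
Qed.

Lemma triple n (p q s : nat -> bool) : (2 <= n)%N ->
  (forall k, (k < n)%N -> p k -> p k.+1) -> p 0 = false -> p n ->
  (forall k, (k < n)%N -> q k -> q k.+1) -> q 0 = false -> q n ->
  (forall k, (k < n)%N -> s k -> s k.+1) -> s 0 = false -> s n ->
  exists x y z, [/\ (x <= n)%N, (y <= n)%N, (z <= n)%N &
   [/\ (x + y + z = 2 * n)%N \/ (x + y + z = n)%N, p x = q y & q y = s z]].
Proof.
move=> n2 mp p0 pn mq q0 qn ms s0 sn.
case: (thr mp p0 pn) => tp [tp0 tpn Hp].
case: (thr mq q0 qn) => tq [tq0 tqn Hq].
case: (thr ms s0 sn) => ts [ts0 tsn Hs].
have G : forall x y z, (x <= n)%N -> (y <= n)%N -> (z <= n)%N ->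
   ((tp <= x) = (tq <= y))%N -> ((tq <= y) = (ts <= z))%N ->
   (x + y + z = 2 * n)%N \/ (x + y + z = n)%N ->
   exists x y z, [/\ (x <= n)%N, (y <= n)%N, (z <= n)%N &
   [/\ (x + y + z = 2 * n)%N \/ (x + y + z = n)%N, p x = q y & q y = s z]].
  move=> x y z xn yn zn h1 h2 h3; exists x, y, z; split => //; split => //.
  - by rewrite Hp // Hq.
  - by rewrite Hq // Hs.
case: (leqP (tp + tq + ts) (2 * n)) => T.
- case: (leqP (tq + ts) n) => T2.
  + apply: (G n (n - ts) ts) => //; try lia.
  + apply: (G (2 * n - tq - ts) tq ts) => //; try lia.
- case: (leqP tq (n - (tp - 1))) => T2.
  + apply: (G (tp - 1) (tq - 1) (n - (tp - 1) - (tq - 1))) => //; try lia.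
  + apply: (G (tp - 1) (n - (tp - 1)) 0) => //; try lia.
Qed.

Section AbsS.
Variable n : nat.
Variable o : seq ty -> alt.
Hypothesis operm : forall s t, size s = n -> perm_eq s t -> o s = o t.
Hypothesis oSP : forall X V r, size r = n.-1 -> (rk X (o (V :: r)) <= rk X (o (X :: r)))%N.
Hypothesis opar : forall s x y, size s = n -> x != y ->
  all (fun t => rk t x <= rk t y)%N s -> o s != x.
Hypothesis n2 : (2 <= n)%N.

Lemma stepL X V r : size r = n.-1 -> o (X :: r) = topt V -> o (V :: r) = topt V.
Proof. move=> Hr E; apply: rk2; have := oSP V X Hr; rewrite E rk_top. by []. Qed.

Lemma stepW X V r x : rk X x = 0 -> size r = n.-1 -> o (X :: r) = x -> o (V :: r) = x.
Proof. move=> H0 Hr E; apply: (rk0 H0); have := oSP X V Hr; by rewrite E H0. Qed.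

Lemma blockm (P : pred ty) X V x :
  (forall r, size r = n.-1 -> all P r -> o (X :: r) = x -> o (V :: r) = x) ->
  P X -> P V ->
  forall k rest, (k + size rest)%N = n -> all P rest ->
  o (nseq k X ++ rest) = x -> o (nseq k V ++ rest) = x.
Proof.
move=> st PX PV; elim=> [//|k IH] rest Hs Pr /= E.
have Hs' : size (nseq k X ++ rest) = n.-1 by rewrite size_cat size_nseq; lia.
have Pa : all P (nseq k X ++ rest) by rewrite all_cat all_nseq PX orbT.
have := st _ Hs' Pa E => E2.
have E3 : o (nseq k X ++ V :: rest) = x.
  by rewrite -E2; apply: operm; [rewrite /= size_cat size_nseq /=; lia | permc].
have := IH (V :: rest) ltac:(rewrite /=; lia) ltac:(by rewrite /= PV) E3 => E4.
by rewrite -E4; apply: operm; [rewrite /= size_cat size_nseq /=; lia | permc].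
Qed.

Lemma moveblk (P : pred ty) X V x k rest s t :
  (forall r, size r = n.-1 -> all P r -> o (X :: r) = x -> o (V :: r) = x) ->
  P X -> P V -> all P rest -> (k + size rest)%N = n ->
  perm_eq s (nseq k X ++ rest) -> perm_eq (nseq k V ++ rest) t ->
  o s = x -> o t = x.
Proof.
move=> st PX PV Pr Hs p1 p2 E.
have Hsz : size s = n by rewrite (perm_size p1) size_cat size_nseq.
rewrite (operm Hsz p1) in E.
have := blockm st PX PV Hs Pr E => E2.
rewrite -E2; apply/esym/operm => //; by rewrite size_cat size_nseq.
Qed.


Definition edg X Y k := o (nseq k X ++ nseq (n - k) Y) == topt X.

Lemma unan X : o (nseq n X) = topt X.
Proof.
apply/eqP/negPn/negP => H.
have Ha : all (fun t => rk t (o (nseq n X)) <= rk t (topt X))%N (nseq n X).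
  by rewrite all_nseq rk_top rk_le2 orbT.
by have := opar (size_nseq _ _) H Ha; rewrite eqxx.
Qed.

Lemma edge2 X Y k z w : (k <= n)%N -> w != z -> (rk X z <= rk X w)%N -> (rk Y z <= rk Y w)%N ->
  o (nseq k X ++ nseq (n - k) Y) != z.
Proof.
move=> kn wz h1 h2.
have Hs : size (nseq k X ++ nseq (n - k) Y) = n by rewrite size_cat !size_nseq; lia.
have Ha : all (fun t => rk t z <= rk t w)%N (nseq k X ++ nseq (n - k) Y).
  by rewrite all_cat !all_nseq h1 h2 !orbT.
by apply: (opar Hs _ Ha); rewrite eq_sym.
Qed.

Lemma e_mono X Y k : (k < n)%N -> edg X Y k -> edg X Y k.+1.
Proof.
move=> kn /eqP E; apply/eqP.
have st : forall r, size r = n.-1 -> all predT r -> o (Y :: r) = topt X -> o (X :: r) = topt X.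
  by move=> r Hr _; apply: stepL.
have Hs : (1 + size (nseq k X ++ nseq (n - k.+1) Y))%N = n.
  by rewrite size_cat !size_nseq; lia.
have p1 : perm_eq (nseq k X ++ nseq (n - k) Y) (nseq 1 Y ++ (nseq k X ++ nseq (n - k.+1) Y)) by permc.
have p2 : perm_eq (nseq 1 X ++ (nseq k X ++ nseq (n - k.+1) Y)) (nseq k.+1 X ++ nseq (n - k.+1) Y) by permc.
exact: (moveblk st isT isT (all_predT _) Hs p1 p2 E).
Qed.

Lemma e0 X Y : topt X != topt Y -> edg X Y 0 = false.
Proof. by move=> H; rewrite /edg /= subn0 unan eq_sym (negbTE H). Qed.

Lemma en X Y : edg X Y n.
Proof. by rewrite /edg subnn cats0 unan. Qed.

Lemma mv X V x k rest s t :
  (forall r, size r = n.-1 -> o (X :: r) = x -> o (V :: r) = x) ->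
  (k + size rest)%N = n ->
  perm_eq s (nseq k X ++ rest) -> perm_eq (nseq k V ++ rest) t ->
  o s = x -> o t = x.
Proof.
move=> st Hs p1 p2; apply: (@moveblk predT X V x k rest) => //.
- by move=> r Hr _; apply: st.
- exact: all_predT.
Qed.

Lemma cycle_lem X Y Z a b g : midt X = topt Y -> midt Y = topt Z -> midt Z = topt X ->
  topt X != topt Y -> topt Y != topt Z -> topt X != topt Z ->
  (a + b + g)%N = n ->
  ~ (edg X Y (a + g) = edg Y Z (a + b) /\ edg Y Z (a + b) = edg Z X (b + g)).
Proof.
move=> mX mY mZ dxy dyz dxz Hn.
set s := nseq a X ++ nseq b Y ++ nseq g Z.
have rYx : rk Y (topt X) = 0 by apply: rk_z => //; rewrite mY.
have rZy : rk Z (topt Y) = 0 by apply: rk_z; rewrite ?mZ // eq_sym.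
have rXz : rk X (topt Z) = 0 by apply: rk_z; rewrite ?mX // eq_sym.
have FxP : o s = topt X -> edg X Y (a + g).
  move=> E; apply/eqP; move: E; apply: (@mv Z X _ g (nseq a X ++ nseq b Y)).
  - by move=> r Hr; apply: stepL.
  - by rewrite size_cat !size_nseq; lia.
  - by permc.
  - by permc.
have FxS : o s = topt X -> edg Z X (b + g) = false.
  move=> E; apply/negbTE; rewrite /edg.
  have -> : o (nseq (b + g) Z ++ nseq (n - (b + g)) X) = topt X.
    move: E; apply: (@mv Y Z _ b (nseq a X ++ nseq g Z)).
    - by move=> r Hr; apply: stepW.
    - by rewrite size_cat !size_nseq; lia.
    - by permc.
    - by permc.
  by [].
have FyQ : o s = topt Y -> edg Y Z (a + b).
  move=> E; apply/eqP; move: E; apply: (@mv X Y _ a (nseq b Y ++ nseq g Z)).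
  - by move=> r Hr; apply: stepL.
  - by rewrite size_cat !size_nseq; lia.
  - by permc.
  - by permc.
have FyP : o s = topt Y -> edg X Y (a + g) = false.
  move=> E; apply/negbTE; rewrite /edg.
  have -> : o (nseq (a + g) X ++ nseq (n - (a + g)) Y) = topt Y.
    move: E; apply: (@mv Z X _ g (nseq a X ++ nseq b Y)).
    - by move=> r Hr; apply: stepW.
    - by rewrite size_cat !size_nseq; lia.
    - by permc.
    - by permc.
  by rewrite eq_sym.
have FzS : o s = topt Z -> edg Z X (b + g).
  move=> E; apply/eqP; move: E; apply: (@mv Y Z _ b (nseq a X ++ nseq g Z)).
  - by move=> r Hr; apply: stepL.
  - by rewrite size_cat !size_nseq; lia.
  - by permc.
  - by permc.
have FzQ : o s = topt Z -> edg Y Z (a + b) = false.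
  move=> E; apply/negbTE; rewrite /edg.
  have -> : o (nseq (a + b) Y ++ nseq (n - (a + b)) Z) = topt Z.
    move: E; apply: (@mv X Y _ a (nseq b Y ++ nseq g Z)).
    - by move=> r Hr; apply: stepW.
    - by rewrite size_cat !size_nseq; lia.
    - by permc.
    - by permc.
  by rewrite eq_sym.
move=> [H1 H2].
case: (alt3 (o s) dxy dyz dxz) => E.
- by move: (FxP E) (FxS E); rewrite H1 H2 => ->.
- by move: (FyQ E) (FyP E); rewrite H1 => ->.
- by move: (FzS E) (FzQ E); rewrite -H2 => ->.
Qed.

Lemma linkm U1 V1 U2 V2 u v w j : (j <= n)%N ->
  u != v -> v != w -> u != w ->
  topt U1 = u -> topt U2 = u -> topt V1 = v -> topt V2 = v ->
  rk U1 w = 0 -> rk V1 w = 1 -> rk U2 w = 1 -> rk V2 w = 0 -> rk V1 u = 0 -> rk U1 v = 1 ->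
  o (nseq j U1 ++ nseq (n - j) V1) = o (nseq j U2 ++ nseq (n - j) V2).
Proof.
move=> jn duv dvw duw tU1 tU2 tV1 tV2 r1 r2 r3 r4 r5 r6.
have q1 : rk V1 v = 2 by rewrite -tV1 rk_top.
have q2 : rk U2 u = 2 by rewrite -tU2 rk_top.
have E1 : o (nseq j U1 ++ nseq (n - j) V1) != w.
  by apply: (edge2 (w := v)); rewrite ?r1 ?r2 ?q1 // eq_sym.
have E2 : o (nseq j U2 ++ nseq (n - j) V2) != w.
  by apply: (edge2 (w := u)); rewrite ?r3 ?r4 ?q2 // eq_sym.
case: (alt3 (o (nseq j U1 ++ nseq (n - j) V1)) duv dvw duw) => E.
- rewrite E; apply/esym.
  have H : o (nseq j U2 ++ nseq (n - j) V1) = u.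
    move: E; apply: (@mv U1 U2 _ j (nseq (n - j) V1)).
    + by move=> r Hr; rewrite -tU2; apply: stepL.
    + by rewrite size_nseq; lia.
    + by permc.
    + by permc.
  move: H; apply: (@mv V1 V2 _ (n - j) (nseq j U2)).
  + by move=> r Hr; apply: stepW.
  + by rewrite size_nseq; lia.
  + by permc.
  + by permc.
- rewrite E; apply/esym.
  have H : o (nseq j U1 ++ nseq (n - j) V2) = v.
    move: E; apply: (@mv V1 V2 _ (n - j) (nseq j U1)).
    + by move=> r Hr; rewrite -tV2; apply: stepL.
    + by rewrite size_nseq; lia.
    + by permc.
    + by permc.
  pose P := fun t => (rk t w <= rk t u)%N.
  have PU2 : P U2 by rewrite /P r3 -tU2 rk_top.
  move: H.
  apply: (@moveblk P U1 U2 v j (nseq (n - j) V2)) => //.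
  + move=> r Hr Pr E'.
    have H1 := oSP U1 U2 Hr; rewrite E' r6 in H1.
    have H2 : o (U2 :: r) != w.
      have Hs2 : size (U2 :: r) = n by rewrite /= Hr; lia.
      have Ha : all P (U2 :: r) by rewrite /= Pr andbT.
      by apply: (opar Hs2 _ Ha); rewrite eq_sym.
    have H3 : o (U2 :: r) != u.
      apply/eqP => E3; rewrite E3 -tU1 rk_top in H1; by [].
    by case: (alt3 (o (U2 :: r)) duv dvw duw) => E4; move: H2 H3; rewrite E4 ?eqxx.
  + by rewrite /P r1.
  + by rewrite all_nseq /P r4 orbT.
  + by rewrite size_nseq; lia.
- by rewrite E eqxx in E1.
Qed.

Lemma linkE U1 V1 U2 V2 u v w k : (k <= n)%N ->
  u != v -> v != w -> u != w ->
  topt U1 = u -> topt U2 = u -> topt V1 = v -> topt V2 = v ->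
  rk U1 w = 0 -> rk V1 w = 1 -> rk U2 w = 1 -> rk V2 w = 0 -> rk V1 u = 0 -> rk U1 v = 1 ->
  edg V2 U2 k = ~~ edg U1 V1 (n - k).
Proof.
move=> kn duv dvw duw tU1 tU2 tV1 tV2 r1 r2 r3 r4 r5 r6.
rewrite /edg tV2 tU1.
have -> : o (nseq k V2 ++ nseq (n - k) U2) = o (nseq (n - k) U2 ++ nseq (n - (n - k)) V2).
  by apply: operm; [rewrite size_cat !size_nseq; lia | permc].
rewrite -(@linkm U1 V1 U2 V2 u v w (n - k) _ duv dvw duw tU1 tU2 tV1 tV2 r1 r2 r3 r4 r5 r6); last by lia.
have q1 : rk V1 v = 2 by rewrite -tV1 rk_top.
have E1 : o (nseq (n - k) U1 ++ nseq (n - (n - k)) V1) != w.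
  apply: (edge2 (w := v)); rewrite ?r1 ?r2 ?q1 //; first [lia | by rewrite eq_sym].
move: E1; case: (alt3 (o (nseq (n - k) U1 ++ nseq (n - (n - k)) V1)) duv dvw duw) => ->.
- by rewrite (negbTE duv) eqxx.
- by rewrite eqxx [v == u]eq_sym (negbTE duv).
- by rewrite eqxx.
Qed.

Lemma abs_false : False.
Proof.
pose P := edg tAB tBC; pose Q := edg tBC tCA; pose S := edg tCA tAB.
have cyc1 : forall a b g, (a + b + g)%N = n -> ~ (P (a + g) = Q (a + b) /\ Q (a + b) = S (b + g)).
  by move=> a b g H; apply: (cycle_lem (X := tAB) (Y := tBC) (Z := tCA)).
have cyc2 : forall a b g, (a + b + g)%N = n ->
    ~ (edg tAC tCB (a + g) = edg tCB tBA (a + b) /\ edg tCB tBA (a + b) = edg tBA tAC (b + g)).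
  by move=> a b g H; apply: (cycle_lem (X := tAC) (Y := tCB) (Z := tBA)).
have l1 : forall k, (k <= n)%N -> edg tBA tAC k = ~~ P (n - k).
  by move=> k kn; apply: (linkE (u := aA) (v := aB) (w := aC)).
have l2 : forall k, (k <= n)%N -> edg tAC tCB k = ~~ S (n - k).
  by move=> k kn; apply: (linkE (u := aC) (v := aA) (w := aB)).
have l3 : forall k, (k <= n)%N -> edg tCB tBA k = ~~ Q (n - k).
  by move=> k kn; apply: (linkE (u := aB) (v := aC) (w := aA)).
have [x [y [z [xn [yn [zn [Hs [H1 H2]]]]]]]] : exists x y z, [/\ (x <= n)%N, (y <= n)%N, (z <= n)%N &
   [/\ (x + y + z = 2 * n)%N \/ (x + y + z = n)%N, P x = Q y & Q y = S z]].
  apply: (triple n2).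
  - by move=> k kn; apply: e_mono.
  - by apply: e0.
  - by apply: en.
  - by move=> k kn; apply: e_mono.
  - by apply: e0.
  - by apply: en.
  - by move=> k kn; apply: e_mono.
  - by apply: e0.
  - by apply: en.
case: Hs => Hs.
- apply: (cyc1 (n - z) (n - x) (n - y)); first by lia.
  have -> : (n - z + (n - y) = x)%N by lia.
  have -> : (n - z + (n - x) = y)%N by lia.
  have -> : (n - x + (n - y) = z)%N by lia.
  by split.
- apply: (cyc2 x z y); first by lia.
  rewrite l2; last by lia.
  rewrite l3; last by lia.
  rewrite l1; last by lia.
  have -> : (n - (x + y) = z)%N by lia.
  have -> : (n - (x + z) = y)%N by lia.
  have -> : (n - (z + y) = x)%N by lia.
  by rewrite H1 H2.
Qed.

End AbsS.


Local Open Scope classical_set_scope.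
Local Open Scope ring_scope.

Section Seg.
Variables (R : realType) (m : nat).
Definition seg (p q : 'rV[R]_m) : set 'rV[R]_m :=
  (fun t : R => p + t *: (q - p)) @` `[0, 1].

Lemma seg_closed p q : closed (seg p q).
Proof.
apply: compact_closed; first exact: norm_hausdorff.
apply: continuous_compact; last exact: segment_compact.
apply: continuous_subspaceT => t.
apply: cvgD; first exact: cvg_cst.
exact: scalel_continuous.
Qed.

Lemma segP p q x : seg p q x <-> exists t : R, [/\ 0 <= t, t <= 1 & x = p + t *: (q - p)].
Proof.
split.
  by case=> t; rewrite /= in_itv /= => /andP[t0 t1] <-; exists t.
by case=> t [t0 t1 ->]; exists t => //; rewrite /= in_itv /= t0 t1.
Qed.

Lemma seg_convex p q : convex_set (seg p q).
Proof.
move=> x y l; rewrite !in_setE => /segP[s [s0 s1 ->]] /segP[t [t0 t1 ->]].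
apply/segP; exists (l%:inum * s + (1 - l%:inum) * t).
have l0 : 0 <= l%:inum by [].
have l1 : l%:inum <= 1 by [].
split.
- nra.
- nra.
- rewrite -[conv _ _ _]/(l%:num *: (p + s *: (q - p)) + (1 - l%:num) *: (p + t *: (q - p))).
  move: (q - p) => v; rewrite !scalerDr !scalerA addrACA -[l%:num *: p + _]scalerDl -scalerDl.
  by rewrite [l%:num + _]addrC subrK scale1r.
Qed.

Lemma seg_sub (D : set 'rV[R]_m) p q : convex_set D -> D p -> D q -> seg p q `<=` D.
Proof.
move=> cD Dp Dq x /segP[t [t0 t1 ->]].
have := cD q p (Itv01 t0 t1); rewrite !in_setE => /(_ Dq Dp).
congr D; rewrite -[conv _ _ _]/(t *: q + (1 - t) *: p).
by rewrite scalerBr scalerBl scale1r addrCA.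
Qed.
End Seg.


Section Transfer.
Variables (R : realType) (m n : nat) (D : set 'rV[R]_m) (M : profile n D -> pt D -> (pt D -> R)).
Lemma transfer : is_ANM M -> symmetric_ANM M -> forall i j, can_manipulate M j -> can_manipulate M i.
Proof.
move=> anm sym i j [u [x0 [v [s [s' [pu iv ss ss' lt]]]]]].
pose sg := tperm i j.
have sgE : forall k, (sg k == j) = (k == i).
  by move=> k; rewrite -{1}(tpermL i j) (inj_eq (@perm_inj _ sg)).
have pu' : profileU (replace u j v).
  by move=> k; rewrite /replace; case: ifP.
exists (fun k => u (sg k)), x0, v, s, s'; split.
- by move=> k; apply: pu.
- exact: iv.
- case: (anm (fun k => u (sg k)) x0 (fun k => pu _)) => _ [z [Hz _]].
  by rewrite (sym u x0 sg s z pu ss Hz).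
- have E : replace (fun k => u (sg k)) i v = (fun k => replace u j v (sg k)).
    by apply: funext => k; rewrite /replace sgE.
  rewrite E.
  case: (anm (fun k => replace u j v (sg k)) x0 (fun k => pu' _)) => _ [z [Hz _]].
  by rewrite (sym _ x0 sg s' z pu' ss' Hz).
- by rewrite /sg tpermL.
Qed.
End Transfer.

Section Real.
Variables (R : realType) (m n : nat) (D : set 'rV[R]_m).
Variable (M : profile n D -> pt D -> (pt D -> R)).
Hypotheses (n2 : (2 <= n)%N) (Dcl : closed D) (Dcvx : convex_set D) (anm : is_ANM M)
  (pe : pareto_efficient M) (sym : symmetric_ANM M).
Variables (A B C : 'rV[R]_m).
Hypotheses (DA : D A) (DB : D B) (DC : D C).
Hypothesis ind : forall s t : R, s *: (B - A) + t *: (C - A) = 0 -> s = 0 /\ t = 0.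

Lemma AB : A != B.
Proof.
apply/eqP => E; have [] := @ind 1 0; first by rewrite E subrr scaler0 scale0r addr0.
by move=> /eqP; rewrite oner_eq0.
Qed.
Lemma AC : A != C.
Proof.
apply/eqP => E; have [] := @ind 0 1; first by rewrite E subrr scaler0 scale0r add0r.
by move=> _ /eqP; rewrite oner_eq0.
Qed.
Lemma BC : B != C.
Proof.
apply/eqP => E; have [] := @ind 1 (-1); first by rewrite E scaleN1r scale1r subrr.
by move=> /eqP; rewrite oner_eq0.
Qed.

Lemma seg_l (p q : 'rV[R]_m) : seg p q p.
Proof. by apply/segP; exists 0; rewrite scale0r addr0 lexx ler01. Qed.
Lemma seg_r (p q : 'rV[R]_m) : seg p q q.
Proof. by apply/segP; exists 1; rewrite scale1r lexx ler01 addrC subrK. Qed.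

Lemma C_nAB : ~ seg A B C.
Proof.
move=> /segP[t [_ _ E]].
have hCA : C - A = t *: (B - A) by rewrite E addrAC subrr add0r.
have [] := @ind t (-1); first by rewrite scaleN1r hCA subrr.
by move=> _ /eqP; rewrite oppr_eq0 oner_eq0.
Qed.
Lemma B_nAC : ~ seg A C B.
Proof.
move=> /segP[t [_ _ E]].
have hBA : B - A = t *: (C - A) by rewrite E addrAC subrr add0r.
have [] := @ind 1 (- t); first by rewrite scale1r scaleNr hBA subrr.
by move=> /eqP; rewrite oner_eq0.
Qed.
Lemma A_nBC : ~ seg B C A.
Proof.
move=> /segP[t [_ _ E]].
have hBA : B - A = - (t *: (C - B)) by rewrite E opprD addrA subrr add0r.
have hCA : C - A = (1 - t) *: (C - B).
  have -> : C - A = (C - B) + (B - A) by rewrite addrA subrK.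
  by rewrite hBA scalerBl scale1r.
have [h1 h2] : 1 - t = 0 /\ t = 0.
  by apply: ind; rewrite hBA hCA scalerN !scalerA mulrC addNr.
by move: h1; rewrite h2 subr0 => /eqP; rewrite oner_eq0.
Qed.
Lemma ABAC x : seg A B x -> seg A C x -> x = A.
Proof.
move=> /segP[s [_ _ E1]] /segP[t [_ _ E2]].
have h : s *: (B - A) = t *: (C - A) by apply: (@addrI _ A); rewrite -E1 -E2.
have [h1 _] : s = 0 /\ - t = 0 by apply: ind; rewrite scaleNr h subrr.
by rewrite E1 h1 scale0r addr0.
Qed.

Definition paV (x : alt) : 'rV[R]_m := match x with aA => A | aB => B | aC => C end.
Lemma paD x : D (paV x). Proof. by case: x. Qed.
Definition pa (x : alt) : pt D := exist _ (paV x) (paD x).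

Lemma paV_eq x y : (paV x == paV y) = (x == y).
Proof.
have ab := AB; have ac := AC; have bc := BC.
have ba : B != A by rewrite eq_sym.
have ca : C != A by rewrite eq_sym.
have cb : C != B by rewrite eq_sym.
by case: x; case: y; rewrite /= ?eqxx ?(negbTE ab) ?(negbTE ac) ?(negbTE bc)
  ?(negbTE ba) ?(negbTE ca) ?(negbTE cb).
Qed.

Definition sg (t : ty) : set 'rV[R]_m := match t with
  | tAB | tBA => seg A B | tAC | tCA => seg A C | tBC | tCB => seg B C end.

Lemma sg_top t : sg t (paV (topt t)).
Proof. by case: t => /=; first [exact: seg_l | exact: seg_r]. Qed.

Lemma sg_pa t y : `[< sg t (paV y) >] = (y == topt t) || (y == midt t).
Proof.
case: t; case: y => /=;
  first [ rewrite asboolT //; first [exact: seg_l | exact: seg_r]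
        | rewrite asboolF //; first [exact: C_nAB | exact: B_nAC | exact: A_nBC] ].
Qed.

Definition utV (t : ty) (v : 'rV[R]_m) : R :=
  if v == paV (topt t) then 2 else if `[< sg t v >] then 1 else 0.
Definition ut (t : ty) (x : pt D) : R := utV t (proj1_sig x).

Lemma ut_pa t y : utV t (paV y) = (rk t y)%:R.
Proof.
rewrite /utV /rk paV_eq sg_pa.
by case: (y == topt t) => //=; case: (y == midt t).
Qed.

Lemma utV_le2 t v : utV t v <= 2.
Proof. rewrite /utV; case: ifP => // _; case: ifP => // _; lra. Qed.
Lemma utV_ge0 t v : 0 <= utV t v.
Proof. rewrite /utV; case: ifP => _; first lra; case: ifP => _; lra. Qed.
Lemma utV2 t v : 2 <= utV t v -> v = paV (topt t).
Proof.
rewrite /utV; case: ifP => [/eqP //|_]; case: ifP => _ H; exfalso; lra.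
Qed.
Lemma utV1 t v : 1 <= utV t v -> sg t v.
Proof.
rewrite /utV; case: ifP => [/eqP -> _|_]; first exact: sg_top.
by case: ifP => [/asboolP //|_ H]; exfalso; lra.
Qed.
Lemma sg_closed t : closed (sg t). Proof. by case: t; apply: seg_closed. Qed.
Lemma sg_convex t : convex_set (sg t). Proof. by case: t; apply: seg_convex. Qed.
Lemma sg_D t : sg t `<=` D. Proof. by case: t; apply: seg_sub. Qed.
Lemma seg_pt (p : 'rV[R]_m) : seg p p = [set p].
Proof.
apply/seteqP; split => x; first by move=> /segP[t [_ _ ->]]; rewrite subrr scaler0 addr0.
by move=> ->; exact: seg_l.
Qed.

Lemma utV_sg t v : sg t v -> 1 <= utV t v.
Proof. by move=> H; rewrite /utV; case: ifP => _; [lra | rewrite asboolT]. Qed.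

Lemma embedE t p : embed (Fsup (ut t) p) = [set v | D v /\ utV t (proj1_sig p) <= utV t v].
Proof.
apply/seteqP; split.
  by move=> _ [[v Dv] H <-]; split.
move=> v [Dv H]; exists (exist _ v Dv) => //.
Qed.

Lemma inU_ut t : inU (ut t).
Proof.
split.
  move=> p; rewrite embedE.
  case: (boolP (proj1_sig p == paV (topt t))) => [/eqP Ep | Np].
    have -> : [set v | D v /\ utV t (proj1_sig p) <= utV t v] = seg (paV (topt t)) (paV (topt t)).
      rewrite seg_pt; apply/seteqP; split => v.
        by move=> [_ H]; apply: utV2; rewrite Ep ut_pa rk_top in H.
      by move=> ->; split; [exact: paD | rewrite Ep].
    by split; [apply: seg_closed | apply: seg_convex].
  case: (asboolP (sg t (proj1_sig p))) => Sp.
    have -> : [set v | D v /\ utV t (proj1_sig p) <= utV t v] = sg t.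
      apply/seteqP; split => v.
        by move=> [_ H]; apply: (@utV1 t); apply: le_trans H; apply: utV_sg.
      move=> Sv; split; first exact: (sg_D Sv).
      by rewrite {1}/utV (negbTE Np) asboolT //; apply: utV_sg.
    by split; [apply: sg_closed | apply: sg_convex].
  have -> : [set v | D v /\ utV t (proj1_sig p) <= utV t v] = D.
    apply/seteqP; split => v; first by case.
    by move=> Dv; split => //; rewrite {1}/utV (negbTE Np) asboolF //; apply: utV_ge0.
  by split.
exists (pa (topt t)); split.
  by move=> y; rewrite {2}/ut /= ut_pa rk_top; apply: utV_le2.
move=> [v Dv] H; have := H (pa (topt t)); rewrite /ut /= ut_pa rk_top => /utV2 Ev.
clear H; subst v; congr exist; exact: Prop_irrelevance.
Qed.

Definition prof (s : seq ty) : profile n D := fun j => ut (nth tAB s j).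
Lemma profU s : profileU (prof s). Proof. by move=> j; apply: inU_ut. Qed.
Definition x0 : pt D := pa aA.
Lemma exs s : exists x, is_argmax (M (prof s) x0) x.
Proof. by case: (@anm (prof s) x0 (profU s)) => _ [x [Hx _]]; exists x. Qed.
Definition sett s : pt D := proj1_sig (cid (exs s)).
Lemma sett_spec s : settles M (prof s) x0 (sett s).
Proof. exact: (proj2_sig (cid (exs s))). Qed.
Definition ov s : alt := let v := proj1_sig (sett s) in
  if v == B then aB else if v == C then aC else aA.

Lemma ut_le t v w : v != paV (topt t) -> (sg t v -> sg t w) -> utV t v <= utV t w.
Proof.
move=> Nv Hs; rewrite {1}/utV (negbTE Nv).
case: (asboolP (sg t v)) => H; first by apply: utV_sg; apply: Hs.
exact: utV_ge0.
Qed.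

Lemma sett_ABC s : size s = n -> proj1_sig (sett s) = paV (ov s).
Proof.
move=> Hs; have P := pe (profU s) (sett_spec s).
set x := proj1_sig (sett s).
suff : x = A \/ x = B \/ x = C.
  rewrite /ov -/x; case=> [->|[->|->]].
  - by rewrite (negbTE AB) (negbTE AC).
  - by rewrite eqxx.
  - by rewrite eq_sym (negbTE BC) eqxx.
apply: contrapT => Hn.
have xA : x != A by apply/eqP => E; apply: Hn; left.
have xB : x != B by apply/eqP => E; apply: Hn; right; left.
have xC : x != C by apply/eqP => E; apply: Hn; right; right.
have xT : forall t, x != paV (topt t) by case; rewrite /=.
have [y Hy] : exists y, forall t, sg t x -> sg t (paV y).
  case: (asboolP (seg B C x)) => hBC; last first.
    by exists aA; case => /= H; first [exact: seg_l | exact: seg_r | by exfalso; apply: hBC].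
  case: (asboolP (seg A B x)) => hAB.
    by exists aB; case => /= H; first [exact: seg_l | exact: seg_r |
      by exfalso; move/eqP: xA; apply; apply: ABAC].
  by exists aC; case => /= H; first [exact: seg_l | exact: seg_r | by exfalso; apply: hAB].
have : Fprof (prof s) (sett s) (pa y).
  by move=> j; rewrite /prof /ut; apply: ut_le; [apply: xT | apply: Hy].
rewrite P => /(congr1 (@proj1_sig _ _)) /= E.
by case: y {Hy} E => /= E; [move: xA | move: xB | move: xC]; rewrite /x -E eqxx.
Qed.

Lemma h_operm s t : size s = n -> perm_eq s t -> ov s = ov t.
Proof.
move=> Hs p.
have Hs' : size s == n by rewrite Hs.
pose ts : n.-tuple ty := Tuple Hs'.
have /tuple_permP [sg' Esg] : perm_eq t ts by rewrite perm_sym.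
have Ep : prof t = (fun j => prof s (sg' j)).
  apply: funext => j; rewrite /prof Esg.
  have -> : nth tAB [tuple tnth ts (sg' i) | i < n] j = tnth ts (sg' j).
    by rewrite -tnth_nth tnth_mktuple.
  by rewrite (tnth_nth tAB).
have St := sett_spec t; rewrite Ep in St.
have E := sym (profU s) (sett_spec s) St.
by rewrite /ov E.
Qed.

Hypothesis nm0 : forall j, ~ can_manipulate M j.

Lemma ut_sett X s : size s = n -> ut X (sett s) = (rk X (ov s))%:R.
Proof. by move=> Hs; rewrite /ut (sett_ABC Hs) ut_pa. Qed.

Lemma h_oSP X V r : size r = n.-1 -> (rk X (ov (V :: r)) <= rk X (ov (X :: r)))%N.
Proof.
move=> Hr.
have n0 : (0 < n)%N by apply: leq_trans n2.
pose j0 : 'I_n := Ordinal n0.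
have Hrep : replace (prof (X :: r)) j0 (ut V) = prof (V :: r).
  apply: funext => j; rewrite /replace; case: eqP => [-> //| hj].
  rewrite /prof; case: j hj => [[|k] hk] //= hne.
  by exfalso; apply: hne; apply: val_inj.
have Hs1 : size (X :: r) = n by rewrite /= Hr; lia.
have Hs2 : size (V :: r) = n by rewrite /= Hr; lia.
have nlt : ~ (ut X (sett (X :: r)) < ut X (sett (V :: r))).
  move=> lt; apply: (nm0 (j := j0)).
  exists (prof (X :: r)), x0, (ut V), (sett (X :: r)), (sett (V :: r)); split.
  - exact: profU.
  - exact: inU_ut.
  - exact: sett_spec.
  - by rewrite Hrep; exact: sett_spec.
  - exact: lt.
move/negP: nlt; rewrite -leNgt (ut_sett _ Hs1) (ut_sett _ Hs2).
by rewrite ler_nat.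
Qed.

Lemma h_opar s x y : size s = n -> x != y ->
  all (fun t => rk t x <= rk t y)%N s -> ov s != x.
Proof.
move=> Hs xy Ha; apply/eqP => Hx.
have P := pe (profU s) (sett_spec s).
have Hy : Fprof (prof s) (sett s) (pa y).
  move=> j; rewrite /prof /ut (sett_ABC Hs) Hx !ut_pa ler_nat.
  by apply: (allP Ha); apply: mem_nth; rewrite Hs.
rewrite P in Hy; have := congr1 (@proj1_sig _ _) Hy.
rewrite /= (sett_ABC Hs) Hx => /eqP; rewrite paV_eq => /eqP E.
by move: xy; rewrite E eqxx.
Qed.

Lemma real_false : False.
Proof. exact: (abs_false h_operm h_oSP h_opar n2). Qed.

End Real.

Theorem mainTheorem6 (R : realType) (m n : nat) (D : set 'rV[R]_m)
    (M : profile n D -> pt D -> (pt D -> R)) :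
  (2 <= n)%N ->
  closed D -> convex_set D -> bounded_set D -> D <> setT ->
  not_collinear D ->
  is_ANM M -> cont_in_x M -> cont_in_u M ->
  pareto_efficient M -> symmetric_ANM M ->
  forall i : 'I_n, can_manipulate M i.
Proof.
move=> n2 Dcl Dcvx Dbd DnT [A [B [C [DA DB DC ind]]]] anm cx cu pe sym i.
apply: contrapT => nmi.
have nm0 : forall j, ~ can_manipulate M j.
  by move=> j /(transfer anm sym i); apply: nmi.
exact: (real_false n2 Dcl Dcvx anm pe sym DA DB DC ind nm0).
Qed.
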